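(* Let $G$ be a compact Lie group with normalized Haar measure $dg$, and let $k\geq 2$. Let $\sigma_1,\ldots,\sigma_k$ and $\alpha_1,\ldots,\alpha_k$ be finite-dimensional unitary representations of $G$, and for each pair $1\leq i<j\leq k$ let $\rho_{ij}$ be a finite-dimensional unitary representation of $G$. Define the linear operator $$\Phi\colon V_{\sigma_1}\otimes\cdots\otimes V_{\sigma_k}\to V_{\sigma_1}\otimes\cdots\otimes V_{\sigma_k},$$ $$\Phi:=\int_{G^k}\Bigl(\prod_{i=1}^k\chi_{\alpha_i}(g_i)\Bigr)\Bigl(\prod_{1\leq i<j\leq k}\chi_{\rho_{ij}}(g_i g_j^{-1})\Bigr)\,\sigma_1(g_1)\otimes\cdots\otimes\sigma_k(g_k)\,dg_1\cdots dg_k .$$ Then $\Phi$ is a positive operator, i.e. $\langle v,\Phi v\rangle\geq 0$ for all $v\in V_{\sigma_1}\otimes\cdots\otimes V_{\sigma_k}$ (with respect to the tensor product of the $G$-invariant scalar products).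
   Context: For a finite-dimensional representation $\rho\colon G\to\mathrm{Aut}(V_\rho)$, $\chi_\rho(g)=\mathrm{tr}\,\rho(g)$ denotes its character. Each representation space carries a $G$-invariant Hermitian scalar product making the representation unitary. An operator $A$ on a Hilbert space is positive if $\langle v,Av\rangle\geq 0$ for all $v$. (Diagrammatically, $\Phi$ consists of $k$ Haar intertwiners $\int_G\rho_1(g)\otimes\cdots\otimes\rho_r(g)\,dg$, each with one external line $\sigma_i$, one closed loop $\alpha_i$ through it alone, and for each pair $i<j$ one closed loop $\rho_{ij}$ passing through intertwiner $i$ as $\rho_{ij}$ and through intertwiner $j$ as the dual representation.) *)

(* Defs.v *)
From HB Require Import structures.
From mathcomp Require Import all_boot all_order all_algebra.
From mathcomp Require Import all_classical all_reals topology normedtype.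
Import numFieldNormedType.Exports.
From mathcomp Require Import complex.

Set Implicit Arguments.
Unset Strict Implicit.
Unset Printing Implicit Defensive.

Import Order.TTheory GRing.Theory Num.Theory.
Local Open Scope ring_scope.
Local Open Scope complex_scope.

Definition is_group (G : Type) (mul : G -> G -> G) (inv : G -> G) (e : G) :=
  [/\ forall x y z, mul x (mul y z) = mul (mul x y) z,
      forall x, mul e x = x,
      forall x, mul x e = x,
      forall x, mul (inv x) x = e &
      forall x, mul x (inv x) = e].

Definition is_compact_group (G : topologicalType) (mul : G -> G -> G)
    (inv : G -> G) (e : G) :=
  [/\ is_group mul inv e,
      continuous (fun p : G * G => mul p.1 p.2),
      continuous inv,
      hausdorff_space G &
      compact [set: G]].

(* The normalized Haar integral on continuous real functions, i.e. the
   positive linear functional f |-> \int_G f dg given by the normalized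
   Haar measure (Riesz representation): linear, positive, normalized,
   left invariant. *)
Definition is_haar_integral (R : realType) (G : topologicalType)
    (mul : G -> G -> G) (I : (G -> R) -> R) :=
  [/\ forall f g : G -> R, continuous f -> continuous g ->
        I (fun x => f x + g x) = I f + I g,
      forall (c : R) (f : G -> R), continuous f -> I (fun x => c * f x) = c * I f,
      forall f : G -> R, continuous f -> (forall x, 0 <= f x) -> 0 <= I f,
      I (fun _ => 1) = 1 &
      forall (f : G -> R) (h : G), continuous f -> I (fun x => f (mul h x)) = I f].

Fixpoint iter_int (R : realType) (G : Type) (e : G) (I : (G -> R) -> R)
    (n : nat) (f : (nat -> G) -> R) : R :=
  match n with
  | 0 => f (fun _ => e)
  | n'.+1 => I (fun x => iter_int e I n'
                  (fun g => f (fun j => if j == n' then x else g j)))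
  end.

Definition iter_intC (R : realType) (G : Type) (e : G) (I : (G -> R) -> R)
    (n : nat) (f : (nat -> G) -> R[i]) : R[i] :=
  (iter_int e I n (fun g => complex.Re (f g)))%:C
  + 'i * (iter_int e I n (fun g => complex.Im (f g)))%:C.

(* Finite-dimensional unitary (continuous) representation, as a matrix-valued
   map in an orthonormal basis for the invariant scalar product. *)
Definition is_unitary_rep (R : realType) (G : topologicalType)
    (mul : G -> G -> G) (e : G) (n : nat) (rho : G -> 'M[R[i]]_n) :=
  [/\ rho e = 1%:M,
      forall g h, rho (mul g h) = rho g *m rho h,
      forall g, rho g *m (map_mx Num.conj (rho g))^T = 1%:M &
      forall i j, continuous (fun g => complex.Re (rho g i j)) /\
                  continuous (fun g => complex.Im (rho g i j))].

Definition character (R : realType) (G : Type) (n : nat)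
    (rho : G -> 'M[R[i]]_n) (g : G) : R[i] := \tr (rho g).

(* Matrix coefficients of the operator Phi in the tensor product basis
   indexed by multi-indices a : forall i, 'I_(ds i). The entry of the
   Kronecker product sigma_1(g_1) (x) ... (x) sigma_k(g_k) at (a, b) is
   \prod_i sigma_i(g_i) (a i) (b i). *)
Definition Phi (R : realType) (G : Type) (mul : G -> G -> G) (inv : G -> G)
    (e : G) (I : (G -> R) -> R) (k : nat)
    (ds da : 'I_k -> nat) (dr : 'I_k -> 'I_k -> nat)
    (sigma : forall i : 'I_k, G -> 'M[R[i]]_(ds i))
    (alpha : forall i : 'I_k, G -> 'M[R[i]]_(da i))
    (rho : forall i j : 'I_k, G -> 'M[R[i]]_(dr i j))
    (a b : {dffun forall i : 'I_k, 'I_(ds i)}) : R[i] :=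
  iter_intC e I k (fun g =>
    (\prod_(i < k) character (alpha i) (g i))
    * (\prod_(i < k) \prod_(j < k | (i < j)%N)
         character (rho i j) (mul (g i) (inv (g j))))
    * \prod_(i < k) sigma i (g i) (a i) (b i)).

(* Main.v *)
Require Import Defs.
From HB Require Import structures.
From mathcomp Require Import all_boot all_order all_algebra.
From mathcomp Require Import all_classical all_reals topology normedtype.
Import numFieldNormedType.Exports.
From mathcomp Require Import complex.
Import Order.TTheory GRing.Theory Num.Theory.
Local Open Scope ring_scope.
Local Open Scope complex_scope.
Set Implicit Arguments.
Unset Strict Implicit.
Unset Printing Implicit Defensive.
Section Frame.
Variable R : realType.
Variable G : topologicalType.
Local Notation C := R[i].

Lemma contD {f g : G -> R} : continuous f -> continuous g -> continuous (fun x => f x + g x).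
Proof. move=> cf cg x. exact: cvgD (cf x) (cg x). Qed.
Lemma contM {f g : G -> R} : continuous f -> continuous g -> continuous (fun x => f x * g x).
Proof. move=> cf cg x. exact: cvgM (cf x) (cg x). Qed.
Lemma contN {f : G -> R} : continuous f -> continuous (fun x => - f x).
Proof. move=> cf x. exact: cvgN (cf x). Qed.
Lemma contO {f : G -> G} {h : G -> R} : continuous f -> continuous h -> continuous (fun x => h (f x)).
Proof. move=> cf ch x. exact: (continuous_comp (cf x) (ch (f x))). Qed.

Lemma cont_ext {f g : G -> R} : (forall x, f x = g x) -> continuous f -> continuous g.
Proof. by move=> e; have -> : f = g by apply: funext. Qed.

Definition ccont (f : G -> C) :=
  continuous (fun x => complex.Re (f x)) /\ continuous (fun x => complex.Im (f x)).

Lemma ccont_cst (c : C) : ccont (fun _ => c).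
Proof. by split; apply: cst_continuous. Qed.

Lemma ccontD {f g} : ccont f -> ccont g -> ccont (fun x => f x + g x).
Proof.
move=> [f1 f2] [g1 g2]; split.
- by apply: (cont_ext _ (contD f1 g1)) => x; case: (f x) => ? ?; case: (g x).
- by apply: (cont_ext _ (contD f2 g2)) => x; case: (f x) => ? ?; case: (g x).
Qed.

Lemma ccontM {f g} : ccont f -> ccont g -> ccont (fun x => f x * g x).
Proof.
move=> [f1 f2] [g1 g2]; split.
- by apply: (cont_ext _ (contD (contM f1 g1) (contN (contM f2 g2)))) => x; case: (f x) => ? ?; case: (g x).
- by apply: (cont_ext _ (contD (contM f1 g2) (contM f2 g1))) => x; case: (f x) => ? ?; case: (g x).
Qed.

Lemma ccontJ {f} : ccont f -> ccont (fun x => (f x)^*).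
Proof.
move=> [f1 f2]; split.
- by apply: (cont_ext _ f1) => x; case: (f x).
- by apply: (cont_ext _ (contN f2)) => x; case: (f x).
Qed.

Lemma ccontO {h : G -> G} {f} : continuous h -> ccont f -> ccont (fun x => f (h x)).
Proof. by move=> ch [f1 f2]; split; [exact: (contO ch f1) | exact: (contO ch f2)]. Qed.

Lemma ccont_ext {f g : G -> C} : (forall x, f x = g x) -> ccont f -> ccont g.
Proof. by move=> e; have -> : f = g by apply: funext. Qed.

Lemma ccont_sum (T : Type) (r : seq T) (P : pred T) (F : T -> G -> C) :
  (forall t, ccont (F t)) -> ccont (fun x => \sum_(t <- r | P t) F t x).
Proof.
move=> cF; elim: r => [|t r IH].
  by apply: (ccont_ext (f := fun _ => 0)) (ccont_cst 0) => x; rewrite big_nil.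
case: (boolP (P t)) => Pt.
  by apply: (ccont_ext _ (ccontD (cF t) IH)) => x; rewrite big_cons Pt.
by apply: (ccont_ext _ IH) => x; rewrite big_cons (negbTE Pt).
Qed.

Lemma ccont_prod (T : Type) (r : seq T) (P : pred T) (F : T -> G -> C) :
  (forall t, ccont (F t)) -> ccont (fun x => \prod_(t <- r | P t) F t x).
Proof.
move=> cF; elim: r => [|t r IH].
  by apply: (ccont_ext (f := fun _ => 1)) (ccont_cst 1) => x; rewrite big_nil.
case: (boolP (P t)) => Pt.
  by apply: (ccont_ext _ (ccontM (cF t) IH)) => x; rewrite big_cons Pt.
by apply: (ccont_ext _ IH) => x; rewrite big_cons (negbTE Pt).
Qed.

End Frame.
Section Haar.
Variable R : realType.
Variable G : topologicalType.
Local Notation C := R[i].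
Variables (mul : G -> G -> G) (inv : G -> G) (e : G) (I : (G -> R) -> R).
Hypothesis HI : is_haar_integral mul I.

Definition IC (f : G -> C) : C := (I (fun x => complex.Re (f x)))%:C + 'i * (I (fun x => complex.Im (f x)))%:C.

Lemma Cx (a b : R) : a%:C + 'i * b%:C = a +i* b :> C.
Proof. by simpc. Qed.

Lemma ICE (f : G -> C) : IC f = I (fun x => complex.Re (f x)) +i* I (fun x => complex.Im (f x)).
Proof. by rewrite /IC Cx. Qed.

Lemma IC_ext (f g : G -> C) : (forall x, f x = g x) -> IC f = IC g.
Proof. by move=> H; have -> : f = g by apply: funext. Qed.

Lemma I_ext (f g : G -> R) : (forall x, f x = g x) -> I f = I g.
Proof. by move=> H; have -> : f = g by apply: funext. Qed.

Lemma I_add (f g : G -> R) : continuous f -> continuous g -> I (fun x => f x + g x) = I f + I g.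
Proof. by case: HI => H _ _ _ _; apply: H. Qed.
Lemma I_scale (c : R) (f : G -> R) : continuous f -> I (fun x => c * f x) = c * I f.
Proof. by case: HI => _ H _ _ _; apply: H. Qed.
Lemma I_one : I (fun _ => 1) = 1.
Proof. by case: HI. Qed.
Lemma I_left (f : G -> R) h : continuous f -> I (fun x => f (mul h x)) = I f.
Proof. by case: HI => _ _ _ _ H; apply: H. Qed.

Lemma I_cst (c : R) : I (fun _ => c) = c.
Proof.
rewrite -[RHS]mulr1 -I_one -I_scale; last exact: cst_continuous.
by apply: I_ext => x; rewrite mulr1.
Qed.

Lemma IC_cst (c : C) : IC (fun _ => c) = c.
Proof. by rewrite ICE !I_cst; case: c. Qed.

Lemma IC_D (f g : G -> C) : ccont f -> ccont g -> IC (fun x => f x + g x) = IC f + IC g.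
Proof.
move=> [f1 f2] [g1 g2]; rewrite !ICE.
rewrite (I_ext (g := fun x => complex.Re (f x) + complex.Re (g x))); last by move=> x; case: (f x); case: (g x).
rewrite (I_ext (f := fun x => complex.Im _) (g := fun x => complex.Im (f x) + complex.Im (g x))); last by move=> x; case: (f x); case: (g x).
by rewrite !I_add.
Qed.

Lemma IC_Z (c : C) (f : G -> C) : ccont f -> IC (fun x => c * f x) = c * IC f.
Proof.
move=> [f1 f2]; rewrite !ICE.
rewrite (I_ext (g := fun x => complex.Re c * complex.Re (f x) + (- complex.Im c) * complex.Im (f x))); last first.
  by move=> x; case: (f x); case: c => * /=; rewrite mulNr.
rewrite (I_ext (f := fun x => complex.Im _) (g := fun x => complex.Re c * complex.Im (f x) + complex.Im c * complex.Re (f x))); last first.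
  by move=> x; case: (f x); case: c => * /=.
rewrite !I_add; try (apply: contM => //; exact: cst_continuous).
by rewrite !I_scale //; case: c => a b /=; simpc.
Qed.

End Haar.
Section Haar2.
Variable R : realType.
Variable G : topologicalType.
Local Notation C := R[i].
Variables (mul : G -> G -> G) (inv : G -> G) (e : G) (I : (G -> R) -> R).
Hypothesis HI : is_haar_integral mul I.
Local Notation IC := (IC I).

Lemma IC_J (f : G -> C) : ccont f -> IC (fun x => (f x)^*) = (IC f)^*.
Proof.
move=> [f1 f2]; rewrite !ICE.
rewrite (I_ext I (f := fun x => complex.Im _) (g := fun x => (-1) * complex.Im (f x))); last first.
  by move=> x; case: (f x) => * /=; rewrite mulN1r.
rewrite (I_scale HI) //; rewrite (I_ext I (f := fun x => complex.Re _) (g := fun x => complex.Re (f x))); last first.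
  by move=> x; case: (f x).
by rewrite mulN1r.
Qed.

Lemma IC_L (f : G -> C) h : ccont f -> IC (fun x => f (mul h x)) = IC f.
Proof.
move=> [f1 f2]; rewrite !ICE.
by rewrite (I_left HI (f := fun y => complex.Re (f y))) // (I_left HI (f := fun y => complex.Im (f y))).
Qed.

Lemma IC_0 : IC (fun _ => 0) = 0.
Proof. exact: (IC_cst HI). Qed.

Lemma IC_sum (T : Type) (r : seq T) (P : pred T) (d : T -> C) (F : T -> G -> C) :
  (forall t, ccont (F t)) ->
  IC (fun x => \sum_(t <- r | P t) d t * F t x) = \sum_(t <- r | P t) d t * IC (F t).
Proof.
move=> cF; elim: r => [|t r IH].
  rewrite big_nil; transitivity (IC (fun _ : G => 0)); last exact: IC_0.
  by apply: (IC_ext I) => x; rewrite big_nil.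
rewrite big_cons; case: (boolP (P t)) => Pt.
  rewrite -IH -(IC_Z HI) // -(IC_D HI).
  - by apply: (IC_ext I) => x; rewrite big_cons Pt.
  - by apply: ccontM => //; apply: ccont_cst.
  - by apply: ccont_sum => s; apply: ccontM => //; apply: ccont_cst.
rewrite -IH; apply: (IC_ext I) => x; by rewrite big_cons (negbTE Pt).
Qed.

Lemma iterC_S n (F : (nat -> G) -> C) :
  iter_intC e I n.+1 F =
  IC (fun x => iter_intC e I n (fun g => F (fun j => if j == n then x else g j))).
Proof.
rewrite /iter_intC /= /IC.
by congr (_%:C + _ * _%:C); apply: (I_ext I) => x; rewrite Cx.
Qed.

Lemma LC n (T : finType) (c : T -> C) (F : T -> nat -> G -> C) :
  (forall t i, ccont (F t i)) ->
  iter_intC e I n (fun g => \sum_t c t * \prod_(i < n) F t i (g i)) =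
  \sum_t c t * \prod_(i < n) IC (F t i).
Proof.
elim: n c => [|n IH] c cF.
  rewrite /iter_intC /= -complexE.
  by apply: eq_bigr => t _; rewrite !big_ord0.
rewrite iterC_S.
transitivity (IC (fun x => \sum_t (c t * \prod_(i < n) IC (F t i)) * F t n x)).
  apply: (IC_ext I) => x.
  transitivity (iter_intC e I n (fun g => \sum_t (c t * F t n x) * \prod_(i < n) F t i (g i))).
    congr (iter_intC e I n); apply: funext => g; apply: eq_bigr => t _.
    rewrite big_ord_recr /= eqxx -mulrA; congr (_ * _); rewrite mulrC; congr (_ * _).
    by apply: eq_bigr => i _; rewrite /= ifN // neq_ltn ltn_ord.
  rewrite IH //; apply: eq_bigr => t _; by rewrite mulrAC.
rewrite IC_sum //; apply: eq_bigr => t _; by rewrite big_ord_recr /= mulrA.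
Qed.

End Haar2.
Section Pad.
Variable R : realType.
Local Notation C := R[i].

Definition E n (A : 'M[C]_n) (p q : nat) : C :=
  if insub p is Some p' then (if insub q is Some q' then A p' q' else 0) else 0.

Lemma E_val n (A : 'M[C]_n) (p q : 'I_n) : E A p q = A p q.
Proof. by rewrite /E !valK. Qed.

Lemma E_outl n (A : 'M[C]_n) p q : (n <= p)%N -> E A p q = 0.
Proof. by move=> h; rewrite /E insubN // -leqNgt. Qed.

Lemma E_outr n (A : 'M[C]_n) p q : (n <= q)%N -> E A p q = 0.
Proof. by move=> h; rewrite /E; case: insub => // p'; rewrite insubN // -leqNgt. Qed.

Lemma sum_pad N n (F : nat -> C) : (n <= N)%N -> (forall r, (n <= r)%N -> F r = 0) ->
  \sum_(r < N) F r = \sum_(r < n) F r.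
Proof.
move=> hn hF; rewrite (big_ord_widen N F hn) /=.
rewrite [LHS](bigID (fun r : 'I_N => (r < n)%N)) /= [X in _ + X]big1 ?addr0 //.
by move=> r; rewrite -leqNgt; apply: hF.
Qed.

Lemma E_mul n N (A B : 'M[C]_n) p q : (n <= N)%N ->
  E (A *m B) p q = \sum_(r < N) E A p r * E B r q.
Proof.
move=> hn; rewrite (sum_pad (F := fun r => E A p r * E B r q) (n := n)) //; last by move=> r hr; rewrite E_outr // mul0r.
rewrite /E; case: insubP => [p' _ _|_]; last by rewrite big1 // => r _; rewrite mul0r.
case: insubP => [q' _ _|_]; last by rewrite big1 // => r _; rewrite valK mulr0.
rewrite mxE; apply: eq_bigr => r _; by rewrite !valK.
Qed.

Lemma E_tr n N (A : 'M[C]_n) : (n <= N)%N -> \tr A = \sum_(r < N) E A r r.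
Proof.
move=> hn; rewrite (sum_pad (F := fun r => E A r r) (n := n)) //; last by move=> r hr; rewrite E_outr.
by rewrite /mxtrace; apply: eq_bigr => r _; rewrite E_val.
Qed.

Lemma E_adj n (A : 'M[C]_n) p q : E (map_mx Num.conj A)^T p q = (E A q p)^*.
Proof.
rewrite /E; case: insubP => [p' _ _|_]; case: insubP => [q' _ _|_] //=; 
  rewrite ?mxE //; by rewrite oppr0.
Qed.

End Pad.
Section Rep.
Variable R : realType.
Variable G : topologicalType.
Local Notation C := R[i].
Variables (mul : G -> G -> G) (inv : G -> G) (e : G) (I : (G -> R) -> R).
Hypothesis HG : is_compact_group mul inv e.
Hypothesis HI : is_haar_integral mul I.
Local Notation IC := (IC I).

Definition krep (X : finType) (k : G -> X -> X -> C) :=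
  [/\ forall g h A B, k (mul g h) A B = \sum_(Cc : X) k g A Cc * k h Cc B,
      forall h A B, (k h B A)^* = k (inv h) A B &
      forall A B, ccont (fun g => k g A B)].

Lemma inv_cont : continuous inv.
Proof. by case: HG. Qed.

Lemma mulA' x y z : mul x (mul y z) = mul (mul x y) z.
Proof. by case: HG => [[]]. Qed.
Lemma mul1g x : mul e x = x.
Proof. by case: HG => [[]]. Qed.
Lemma mulg1 x : mul x e = x.
Proof. by case: HG => [[]]. Qed.
Lemma mulVg x : mul (inv x) x = e.
Proof. by case: HG => [[]]. Qed.
Lemma mulgV x : mul x (inv x) = e.
Proof. by case: HG => [[]]. Qed.

Lemma proj_PP (X : finType) (k : G -> X -> X -> C) : krep k ->
  forall A B, IC (fun g => k g A B) = \sum_(Cc : X) conjc (IC (fun g => k g Cc A)) * IC (fun g => k g Cc B).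
Proof.
case=> kM kS kC A B.
transitivity (IC (fun h => \sum_(Cc : X) IC (fun g => k g Cc B) * k (inv h) A Cc)); last first.
  rewrite (IC_sum HI) //; last by move=> Cc; apply: (ccontO (f := fun y => k y A Cc) inv_cont).
  apply: eq_bigr => Cc _; rewrite mulrC -(IC_J HI (f := fun g => k g Cc A)) //; congr (_ * _).
  by apply: (IC_ext I) => h; rewrite kS.
transitivity (IC (fun _ => IC (fun g => k g A B))); first by rewrite (IC_cst HI).
apply: (IC_ext I) => h.
transitivity (IC (fun g => k (mul (inv h) g) A B)); first by rewrite (IC_L HI (inv h) (kC A B)).
transitivity (IC (fun g => \sum_(Cc : X) k (inv h) A Cc * k g Cc B)).
  by apply: (IC_ext I) => g; rewrite kM.
rewrite (IC_sum HI); first by apply: eq_bigr => Cc _; rewrite mulrC.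
by move=> Cc; apply: kC.
Qed.

Lemma rep_inv n (rho : G -> 'M[C]_n) : is_unitary_rep mul e rho ->
  forall h, rho (inv h) = (map_mx Num.conj (rho h))^T.
Proof.
case=> r1 rM rU rC h.
by rewrite -[LHS]mulmx1 -(rU h) mulmxA -rM mulVg r1 mul1mx.
Qed.

Lemma krep_pad N n (rho : G -> 'M[C]_n) : is_unitary_rep mul e rho -> (n <= N)%N ->
  krep (fun g (p q : 'I_N) => E (rho g) p q).
Proof.
move=> hr hn; have [r1 rM rU rC] := hr; split.
- by move=> g h A B; rewrite rM (E_mul _ _ _ _ hn).
- by move=> h A B; rewrite (rep_inv hr) E_adj.
- move=> A B; rewrite /E; case: insub => [p'|]; last exact: ccont_cst.
  case: insub => [q'|]; last exact: ccont_cst.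
  exact: (rC p' q').
Qed.

Lemma krep_delta N : (0 < N)%N ->
  krep (fun (_ : G) (p q : 'I_N) => (((p : nat) == 0%N) && ((q : nat) == 0%N))%:R : C).
Proof.
case: N => // N _; split.
- move=> _ _ A B; rewrite big_ord_recl /= big1 ?addr0; last first.
    by move=> r _; rewrite andbF mul0r.
  by case: (A : nat) => [|?]; case: (B : nat) => [|?]; rewrite /= ?mulr1 ?mul1r ?mulr0.
- by move=> _ A B; rewrite conjc_nat andbC.
- by move=> A B; apply: ccont_cst.
Qed.

Lemma krep_conj (X : finType) (k : G -> X -> X -> C) : krep k ->
  krep (fun g A B => (k g A B)^*).
Proof.
case=> kM kS kC; split.
- by move=> g h A B; rewrite kM rmorph_sum; apply: eq_bigr => c _; rewrite rmorphM.
- by move=> h A B; rewrite kS.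
- by move=> A B; apply: ccontJ.
Qed.

Lemma krep_pair (X Y : finType) (k1 : G -> X -> X -> C) (k2 : G -> Y -> Y -> C) :
  krep k1 -> krep k2 -> krep (fun g (A B : X * Y) => k1 g A.1 B.1 * k2 g A.2 B.2).
Proof.
case=> kM kS kC [lM lS lC]; split.
- move=> g h A B; rewrite kM lM big_distrlr /= pair_big /=.
  by apply: eq_bigr => c _; rewrite mulrACA.
- by move=> h A B; rewrite rmorphM /= kS lS.
- by move=> A B; apply: ccontM.
Qed.

Lemma krep_ffun (J Y : finType) (k : J -> G -> Y -> Y -> C) :
  (forall j, krep (k j)) ->
  krep (fun g (A B : {ffun J -> Y}) => \prod_j k j g (A j) (B j)).
Proof.
move=> hk; split.
- move=> g h A B.
  rewrite (eq_bigr (fun j => \sum_(c : Y) k j g (A j) c * k j h c (B j))); last first.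
    by move=> j _; case: (hk j) => kM _ _; rewrite kM.
  rewrite bigA_distr_bigA; apply: eq_bigr => Cf _; by rewrite -big_split.
- move=> h A B; rewrite rmorph_prod; apply: eq_bigr => j _ /=.
  by case: (hk j) => _ kS _; rewrite kS.
- move=> A B; apply: ccont_prod => j; by case: (hk j).
Qed.

End Rep.
Section Main.
Variable R : realType.
Variable G : topologicalType.
Local Notation C := R[i].
Variables (mul : G -> G -> G) (inv : G -> G) (e : G) (I : (G -> R) -> R).
Hypothesis HG : is_compact_group mul inv e.
Hypothesis HI : is_haar_integral mul I.
Variables (k : nat) (ds da : 'I_k -> nat) (dr : 'I_k -> 'I_k -> nat).
Variables (sigma : forall i : 'I_k, G -> 'M[R[i]]_(ds i))
    (alpha : forall i : 'I_k, G -> 'M[R[i]]_(da i))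
    (rho : forall i j : 'I_k, G -> 'M[R[i]]_(dr i j)).
Hypotheses (Hsigma : forall i, is_unitary_rep mul e (sigma i))
    (Halpha : forall i, is_unitary_rep mul e (alpha i))
    (Hrho : forall i j : 'I_k, (i < j)%N -> is_unitary_rep mul e (rho i j)).
Variable M : nat.
Hypotheses (hds : forall i, (ds i <= M)%N) (hda : forall i, (da i <= M)%N)
  (hdr : forall i j, (dr i j <= M)%N).
Local Notation N := M.+1.

Definition delta (p q : 'I_N) : C := (((p : nat) == 0%N) && ((q : nat) == 0%N))%:R.

Definition K1 (i j : 'I_k) (g : G) (p q : 'I_N) : C :=
  if (i < j)%N then E (rho i j g) p q else delta p q.
Definition K2 (i j : 'I_k) (g : G) (p q : 'I_N) : C :=
  if (j < i)%N then (E (rho j i g) p q)^* else delta p q.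

Definition Xt := (('I_N * 'I_N) * ({ffun 'I_k -> 'I_N} * {ffun 'I_k -> 'I_N}))%type.

Definition pik (i : 'I_k) (g : G) (A B : Xt) : C :=
  (E (sigma i g) A.1.1 B.1.1 * E (alpha i g) A.1.2 B.1.2) *
  ((\prod_j K1 i j g (A.2.1 j) (B.2.1 j)) * (\prod_j K2 i j g (A.2.2 j) (B.2.2 j))).

Lemma krep_pik i : krep mul inv (pik i).
Proof.
have le := fun n (h : (n <= M)%N) => leqW h.
have hK1 : forall j, krep mul inv (K1 i j).
  move=> j; rewrite /K1; case h: (_ < _)%N; first exact: (krep_pad HG (Hrho h) (le _ (hdr i j))).
  exact: (@krep_delta R G mul inv _ (ltn0Sn M)).
have hK2 : forall j, krep mul inv (K2 i j).
  move=> j; rewrite /K2; case h: (_ < _)%N; first exact: (krep_conj (krep_pad HG (Hrho h) (le _ (hdr j i)))).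
  exact: (@krep_delta R G mul inv _ (ltn0Sn M)).
exact: (krep_pair (krep_pair (krep_pad HG (Hsigma i) (le _ (hds i)))
                              (krep_pad HG (Halpha i) (le _ (hda i))))
                   (krep_pair (krep_ffun hK1) (krep_ffun hK2))).
Qed.

Definition idx (a : {dffun forall i : 'I_k, 'I_(ds i)}) (s : {ffun 'I_k -> 'I_N})
  (U : {ffun 'I_k * 'I_k -> 'I_N}) (i : 'I_k) : Xt :=
  ((inord (a i), s i), ([ffun j : 'I_k => U (i, j)], [ffun j : 'I_k => if (j < i)%N then U (j, i) else ord0])).

Lemma sum_delta : \sum_(p : 'I_N) \sum_(q : 'I_N) delta p q = 1.
Proof.
rewrite big_ord_recl [X in _ + X]big1 ?addr0; last first.
  by move=> p _; rewrite big1 // => q _; rewrite /delta /=.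
by rewrite big_ord_recl [X in _ + X]big1 ?addr0.
Qed.

Lemma chi_alpha i x : character (alpha i) x = \sum_(p : 'I_N) E (alpha i x) p p.
Proof. by rewrite /character (E_tr _ (leqW (hda i))). Qed.

Lemma chi_rho (i j : 'I_k) x y : (i < j)%N ->
  character (rho i j) (mul x (inv y)) =
  \sum_(p : 'I_N) \sum_(q : 'I_N) E (rho i j x) p q * (E (rho i j y) p q)^*.
Proof.
move=> hij; have hr := Hrho hij; have [r1 rM rU rC] := hr.
rewrite /character rM (E_tr _ (leqW (hdr i j))); apply: eq_bigr => p _.
rewrite (E_mul _ _ _ _ (leqW (hdr i j))); apply: eq_bigr => q _.
by rewrite (rep_inv HG hr) E_adj.
Qed.

Lemma E_sigma i x (a b : 'I_(ds i)) : E (sigma i x) (@inord M (a : nat)) (@inord M (b : nat)) = sigma i x a b.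
Proof.
have ha : (a < N)%N by apply: leq_trans (ltn_ord a) (leqW (hds i)).
have hb : (b < N)%N by apply: leq_trans (ltn_ord b) (leqW (hds i)).
by rewrite !inordK // E_val.
Qed.
Definition Tt := ({ffun 'I_k -> 'I_N} * ({ffun 'I_k * 'I_k -> 'I_N} * {ffun 'I_k * 'I_k -> 'I_N}))%type.

Definition PP (i : 'I_k) (x : G) (U1 U2 : {ffun 'I_k * 'I_k -> 'I_N}) : C :=
  (\prod_j K1 i j x (U1 (i, j)) (U2 (i, j))) *
  (\prod_j K2 i j x (if (j < i)%N then U1 (j, i) else ord0) (if (j < i)%N then U2 (j, i) else ord0)).

Lemma pik_split i x (a b : {dffun forall i : 'I_k, 'I_(ds i)}) s U1 U2 :
  pik i x (idx a s U1 i) (idx b s U2 i) = (sigma i x (a i) (b i) * E (alpha i x) (s i) (s i)) * PP i x U1 U2.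
Proof.
rewrite /pik /idx /= E_sigma /PP; congr (_ * (_ * _)); apply: eq_bigr => j _; by rewrite !ffunE.
Qed.

Definition Lf (g : nat -> G) (ij : 'I_k * 'I_k) (p q : 'I_N) : C :=
  if (ij.1 < ij.2)%N then E (rho ij.1 ij.2 (g ij.1)) p q * (E (rho ij.1 ij.2 (g ij.2)) p q)^*
  else delta p q.

Lemma claim1 (g : nat -> G) U1 U2 :
  \prod_(i < k) PP i (g i) U1 U2 = \prod_(ij : 'I_k * 'I_k) Lf g ij (U1 ij) (U2 ij).
Proof.
rewrite /PP big_split /=.
rewrite [X in _ * X](eq_bigr (fun i : 'I_k => \prod_(j < k) (if (j < i)%N then (E (rho j i (g i)) (U1 (j, i)) (U2 (j, i)))^* else 1)) ); last first.
  move=> i _; apply: eq_bigr => j _; rewrite /K2; case h: (j < i)%N => //.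
rewrite [X in _ * X]exchange_big /= -big_split /=.
under eq_bigr => i _ do rewrite -big_split /=.
rewrite pair_big /=.
apply: eq_bigr => -[i j] _ /=; rewrite /K1 /Lf /=; case h: (i < j)%N => //.
by rewrite mulr1.
Qed.

Lemma claim2 (g : nat -> G) :
  \sum_(U1 : {ffun 'I_k * 'I_k -> 'I_N}) \sum_(U2 : {ffun 'I_k * 'I_k -> 'I_N}) \prod_(ij : 'I_k * 'I_k) Lf g ij (U1 ij) (U2 ij)
  = \prod_(ij : 'I_k * 'I_k) \sum_(p : 'I_N) \sum_(q : 'I_N) Lf g ij p q.
Proof.
rewrite bigA_distr_bigA /=; apply: eq_bigr => U1 _.
by rewrite bigA_distr_bigA.
Qed.

Lemma claim3 (g : nat -> G) :
  \prod_(ij : 'I_k * 'I_k) \sum_(p : 'I_N) \sum_(q : 'I_N) Lf g ij p q =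
  \prod_(i < k) \prod_(j < k | (i < j)%N) character (rho i j) (mul (g i) (inv (g j))).
Proof.
under [RHS]eq_bigr => i _ do rewrite big_mkcond /=.
rewrite pair_big /=; apply: eq_bigr => -[i j] _ /=.
rewrite /Lf /=; case h: (i < j)%N; first by rewrite chi_rho.
exact: sum_delta.
Qed.

Lemma sum_t (F : {ffun 'I_k -> 'I_N} -> {ffun 'I_k * 'I_k -> 'I_N} -> {ffun 'I_k * 'I_k -> 'I_N} -> C) :
  \sum_(t : Tt) F t.1 t.2.1 t.2.2 = \sum_s \sum_U1 \sum_U2 F s U1 U2.
Proof.
symmetry.
transitivity (\sum_(s : {ffun 'I_k -> 'I_N}) \sum_(u : {ffun 'I_k * 'I_k -> 'I_N} * {ffun 'I_k * 'I_k -> 'I_N}) F s u.1 u.2).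
  by apply: eq_bigr => s _; rewrite pair_big.
by rewrite pair_big.
Qed.

Lemma stepA (a b : {dffun forall i : 'I_k, 'I_(ds i)}) (g : nat -> G) :
  (\prod_(i < k) character (alpha i) (g i))
  * (\prod_(i < k) \prod_(j < k | (i < j)%N) character (rho i j) (mul (g i) (inv (g j))))
  * \prod_(i < k) sigma i (g i) (a i) (b i)
  = \sum_(t : Tt) \prod_(i < k) pik i (g i) (idx a t.1 t.2.1 i) (idx b t.1 t.2.2 i).
Proof.
rewrite (eq_bigr (fun t : Tt => (\prod_(i < k) sigma i (g i) (a i) (b i) * \prod_(i < k) E (alpha i (g i)) (t.1 i) (t.1 i)) * \prod_(i < k) PP i (g i) t.2.1 t.2.2)); last first.
  move=> t _; rewrite -!big_split /=; apply: eq_bigr => i _; exact: pik_split.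
rewrite (sum_t (fun s U1 U2 => (\prod_(i < k) sigma i (g i) (a i) (b i) * \prod_(i < k) E (alpha i (g i)) (s i) (s i)) * \prod_(i < k) PP i (g i) U1 U2)).
rewrite (eq_bigr (fun s : {ffun 'I_k -> 'I_N} => (\prod_(i < k) sigma i (g i) (a i) (b i) * \prod_(i < k) E (alpha i (g i)) (s i) (s i)) * \prod_(ij : 'I_k * 'I_k) \sum_(p : 'I_N) \sum_(q : 'I_N) Lf g ij p q)); last first.
  move=> s _; rewrite -claim2 big_distrr /=; apply: eq_bigr => U1 _.
  rewrite big_distrr /=; apply: eq_bigr => U2 _; by rewrite claim1.
rewrite -big_distrl /= -big_distrr /=.
rewrite -(bigA_distr_bigA (fun (i : 'I_k) (p : 'I_N) => E (alpha i (g i)) p p)) /= claim3.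
under eq_bigr => i _ do rewrite chi_alpha.
by rewrite mulrC mulrA.
Qed.
Definition Pm (i : 'I_k) (A B : Xt) : C := IC I (fun x => pik i x A B).

Definition Fs (a b : {dffun forall i : 'I_k, 'I_(ds i)}) (t : Tt) (j : nat) : G -> C :=
  if insub j is Some i then (fun x => pik i x (idx a t.1 t.2.1 i) (idx b t.1 t.2.2 i))
  else (fun _ => 1).

Lemma insub_ord (i : 'I_k) : insub (i : nat) = Some i.
Proof. exact: valK. Qed.

Lemma stepB (a b : {dffun forall i : 'I_k, 'I_(ds i)}) :
  Phi mul inv e I sigma alpha rho a b =
  \sum_(t : Tt) \prod_(i < k) Pm i (idx a t.1 t.2.1 i) (idx b t.1 t.2.2 i).
Proof.
rewrite /Phi.
transitivity (iter_intC e I k (fun g => \sum_(t : Tt) 1 * \prod_(i < k) Fs a b t i (g i))).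
  congr (iter_intC e I k); apply: funext => g; rewrite stepA; apply: eq_bigr => t _.
  by rewrite mul1r; apply: eq_bigr => i _; rewrite /Fs insub_ord.
rewrite (LC e HI); last first.
  move=> t j; rewrite /Fs; case: insub => [i|]; last exact: ccont_cst.
  by case: (krep_pik i).
apply: eq_bigr => t _; rewrite mul1r; apply: eq_bigr => i _.
by rewrite /Fs insub_ord.
Qed.

Definition Wf (a : {dffun forall i : 'I_k, 'I_(ds i)}) s U (Cf : {ffun 'I_k -> Xt}) : C :=
  \prod_(i < k) Pm i (Cf i) (idx a s U i).

Definition Yf (a : {dffun forall i : 'I_k, 'I_(ds i)}) s (Cf : {ffun 'I_k -> Xt}) : C :=
  \sum_U Wf a s U Cf.

Lemma stepC (a b : {dffun forall i : 'I_k, 'I_(ds i)}) :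
  Phi mul inv e I sigma alpha rho a b =
  \sum_s \sum_(Cf : {ffun 'I_k -> Xt}) conjc (Yf a s Cf) * Yf b s Cf.
Proof.
rewrite stepB.
rewrite (eq_bigr (fun t : Tt => \sum_(Cf : {ffun 'I_k -> Xt}) conjc (Wf a t.1 t.2.1 Cf) * Wf b t.1 t.2.2 Cf)); last first.
  move=> t _.
  rewrite (eq_bigr (fun i : 'I_k => \sum_(c : Xt) conjc (Pm i c (idx a t.1 t.2.1 i)) * Pm i c (idx b t.1 t.2.2 i))); last first.
    by move=> i _; rewrite /Pm (proj_PP HG HI (krep_pik i)).
  rewrite bigA_distr_bigA; apply: eq_bigr => Cf _.
  by rewrite big_split /= /Wf rmorph_prod.
rewrite (sum_t (fun s U1 U2 => \sum_(Cf : {ffun 'I_k -> Xt}) conjc (Wf a s U1 Cf) * Wf b s U2 Cf)).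
apply eq_bigr => s _.
rewrite [RHS](eq_bigr (fun Cf => \sum_U1 \sum_U2 conjc (Wf a s U1 Cf) * Wf b s U2 Cf)); last first.
  move=> Cf _; rewrite /Yf rmorph_sum big_distrlr /=; done.
rewrite [RHS]exchange_big /=; apply: eq_bigr => U1 _.
by rewrite [RHS]exchange_big.
Qed.

Lemma stepD (v : {dffun forall i : 'I_k, 'I_(ds i)} -> C) :
  0 <= \sum_a \sum_b conjc (v a) * Phi mul inv e I sigma alpha rho a b * v b.
Proof.
pose Z (p : {ffun 'I_k -> 'I_N} * {ffun 'I_k -> Xt}) := \sum_a v a * Yf a p.1 p.2.
suff -> : \sum_a \sum_b conjc (v a) * Phi mul inv e I sigma alpha rho a b * v b =
          \sum_p conjc (Z p) * Z p.
  by apply: sumr_ge0 => p _; rewrite mulrC; apply: mulcJ_ge0.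
transitivity (\sum_a \sum_b \sum_(p : {ffun 'I_k -> 'I_N} * {ffun 'I_k -> Xt})
     (conjc (v a * Yf a p.1 p.2)) * (v b * Yf b p.1 p.2)).
  apply: eq_bigr => a _; apply: eq_bigr => b _.
  rewrite stepC pair_big big_distrr big_distrl /=; apply: eq_bigr => p _.
  rewrite rmorphM /=.
  by rewrite -!mulrA; congr (_ * (_ * _)); rewrite mulrC.
rewrite exchange_big /=.
rewrite (eq_bigr (fun b => \sum_p \sum_a conjc (v a * Yf a p.1 p.2) * (v b * Yf b p.1 p.2))); last first.
  by move=> b _; rewrite exchange_big.
rewrite exchange_big /=; apply: eq_bigr => p _.
by rewrite /Z rmorph_sum big_distrlr /= exchange_big.
Qed.

End Main.

Unset Implicit Arguments.
Set Strict Implicit.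

Theorem theorem1 (R : realType) (G : topologicalType)
    (mul : G -> G -> G) (inv : G -> G) (e : G)
    (HG : is_compact_group mul inv e)
    (I : (G -> R) -> R) (HI : is_haar_integral mul I)
    (k : nat) (Hk : (2 <= k)%N)
    (ds da : 'I_k -> nat) (dr : 'I_k -> 'I_k -> nat)
    (sigma : forall i : 'I_k, G -> 'M[R[i]]_(ds i))
    (alpha : forall i : 'I_k, G -> 'M[R[i]]_(da i))
    (rho : forall i j : 'I_k, G -> 'M[R[i]]_(dr i j))
    (Hsigma : forall i, is_unitary_rep mul e (sigma i))
    (Halpha : forall i, is_unitary_rep mul e (alpha i))
    (Hrho : forall i j : 'I_k, (i < j)%N -> is_unitary_rep mul e (rho i j))
    (v : {dffun forall i : 'I_k, 'I_(ds i)} -> R[i]) :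
  0 <= \sum_(a : {dffun forall i : 'I_k, 'I_(ds i)})
         \sum_(b : {dffun forall i : 'I_k, 'I_(ds i)})
           (v a)^* * Phi mul inv e I sigma alpha rho a b * v b.
Proof.
pose M := (\max_i ds i + \max_i da i + \max_(ij : 'I_k * 'I_k) dr ij.1 ij.2)%N.
have hds : forall i, (ds i <= M)%N.
  move=> i; apply: leq_trans (leq_bigmax i) _; by rewrite /M -addnA leq_addr.
have hda : forall i, (da i <= M)%N.
  move=> i; apply: leq_trans (leq_bigmax i) _; by rewrite /M -addnA addnC -addnA leq_addr.
have hdr : forall i j, (dr i j <= M)%N.
  move=> i j; apply: leq_trans (leq_bigmax (F := fun ij : 'I_k * 'I_k => dr ij.1 ij.2) (i, j)) _.
  by rewrite /M leq_addl.
exact: (stepD HG HI Hsigma Halpha Hrho hds hda hdr v).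
Qed.
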